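(* Under the hypotheses and notation of the Barron estimate (with $v$ of infinite support, $a_n,h_n\in(0,1)$, $a_n\to0$, $h_n\to0$, and $\frac{1}{a_nh_n}=o(n^\tau)$ for some $\tau\in(0,1/2)$), define the oracle measure $\tilde\mu_n$ by $f_{\tilde\mu_n}(x)=f_v(x)\big[(1-a_n)\frac{\mu(A_n(x))}{v(A_n(x))}+a_n\big]$. Then $$\lim_{n\to\infty}\sup_{x\in A_v}\Big|\frac{f_{\tilde\mu_n}(x)}{f_{\mu^*_n}(x)}-1\Big|=0,\qquad\mathbb{P}_\mu\text{-a.s.}$$
   Context: $\mathbb{X}$ is a countably infinite set; for a probability $\mu$ on $\mathbb{X}$, $f_\mu(x)=\mu(\{x\})$ and $A_\mu=\{x:f_\mu(x)>0\}$. $v$ is a probability on $\mathbb{X}$ with infinite support and $\mu\ll v$. For each $n$, $\pi_n$ is a finite partition of $\mathbb{X}$ into cells each of $v$-measure $\ge h_n$, of maximal cardinality among such partitions; $A_n(x)$ is the cell of $\pi_n$ containing $x$. Given i.i.d. $X_1,X_2,\dots\sim\mu$ with law $\mathbb{P}_\mu$ and empirical measure $\hat\mu_n(A)=\frac1n\sum_{k\le n}\mathbb{1}_A(X_k)$, the Barron estimate is $f_{\mu^*_n}(x)=f_v(x)\big[(1-a_n)\frac{\hat\mu_n(A_n(x))}{v(A_n(x))}+a_n\big]$. *)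

(* Defs.v *)
From Stdlib Require Import Reals Lra List ClassicalEpsilon.
Open Scope R_scope.

(** A probability on a countable set T, enumerated by the bijection dec : nat -> T,
    given through its mass function f (f x = mu({x})). *)
Definition is_prob_mass {T : Type} (dec : nat -> T) (f : T -> R) : Prop :=
  (forall x, 0 <= f x) /\ infinite_sum (fun k => f (dec k)) 1.

Definition meas {T : Type} (dec : nat -> T) (f : T -> R) (A : T -> bool) : R :=
  epsilon (inhabits 0%R)
    (fun r => infinite_sum (fun k => if A (dec k) then f (dec k) else 0) r).

(** A labelling g : T -> nat with values < m describes a partition of T into the
    m cells {g = j}, j < m, each of v-measure >= h (hence nonempty). *)
Definition good_partition {T : Type} (dec : nat -> T) (fv : T -> R) (h : R)
  (m : nat) (g : T -> nat) : Prop :=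
  (forall x, (g x < m)%nat) /\
  (forall j, (j < m)%nat -> h <= meas dec fv (fun y => Nat.eqb (g y) j)).

Definition max_partition {T : Type} (dec : nat -> T) (fv : T -> R) (h : R)
  (m : nat) (g : T -> nat) : Prop :=
  good_partition dec fv h m g /\
  (forall m' g', good_partition dec fv h m' g' -> (m' <= m)%nat).

Definition cell {T : Type} (g : T -> nat) (x : T) : T -> bool :=
  fun y => Nat.eqb (g y) (g x).

Record sigma_algebra {Om : Type} (F : (Om -> Prop) -> Prop) : Prop := {
  sa_full : F (fun _ => True);
  sa_compl : forall E, F E -> F (fun w => ~ E w);
  sa_union : forall E : nat -> Om -> Prop, (forall n, F (E n)) ->
               F (fun w => exists n, E n w) }.

Record probability {Om : Type} (F : (Om -> Prop) -> Prop) (P : (Om -> Prop) -> R)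
  : Prop := {
  pr_sa : sigma_algebra F;
  pr_nonneg : forall E, F E -> 0 <= P E;
  pr_full : P (fun _ => True) = 1;
  pr_additive : forall E : nat -> Om -> Prop, (forall n, F (E n)) ->
      (forall n m w, n <> m -> E n w -> E m w -> False) ->
      infinite_sum (fun n => P (E n)) (P (fun w => exists n, E n w)) }.

(** (X_k)_k is an i.i.d. sequence of T-valued random variables with law fmu
    (T countable: joint mass function factorises on every finite set of
    distinct indices). *)
Definition iid_seq {Om T : Type} (F : (Om -> Prop) -> Prop) (P : (Om -> Prop) -> R)
  (fmu : T -> R) (X : nat -> Om -> T) : Prop :=
  (forall k x, F (fun w => X k w = x)) /\
  (forall (l : list nat) (xs : nat -> T), NoDup l ->
     P (fun w => Forall (fun k => X k w = xs k) l)
     = fold_right (fun k acc => fmu (xs k) * acc) 1 l).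

(** empirical measure of A based on the first n observations X 0, ..., X (n-1)
    (these play the role of X_1, ..., X_n) *)
Definition emp {Om T : Type} (X : nat -> Om -> T) (n : nat) (w : Om) (A : T -> bool) : R :=
  / INR n * sum_f_R0 (fun i => if A (X i w) then 1 else 0) (pred n).

Definition barron {Om T : Type} (fv : T -> R) (dec : nat -> T) (a : nat -> R)
  (lab : nat -> T -> nat) (X : nat -> Om -> T) (n : nat) (w : Om) (x : T) : R :=
  fv x * ((1 - a n) * (emp X n w (cell (lab n) x) / meas dec fv (cell (lab n) x)) + a n).

Definition oracle {T : Type} (fv fmu : T -> R) (dec : nat -> T) (a : nat -> R)
  (lab : nat -> T -> nat) (n : nat) (x : T) : R :=
  fv x * ((1 - a n) * (meas dec fmu (cell (lab n) x) / meas dec fv (cell (lab n) x)) + a n).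

(* Main.v *)
Require Import Defs.
From Stdlib Require Import Reals List.
From Stdlib Require Import Lra Lia Arith Permutation Classical ClassicalEpsilon FunctionalExtensionality PropExtensionality.
Open Scope R_scope.


Lemma sum_le_lim (u : nat -> R) (l Sb : R) :
  infinite_sum u l -> (forall n, sum_f_R0 u n <= Sb) -> l <= Sb.
Proof.
  intros Hu HS. destruct (Rle_dec l Sb) as [|H]; auto.
  apply Rnot_le_lt in H. destruct (Hu (l - Sb)) as [N HN]; [lra|].
  specialize (HN N (le_n N)). specialize (HS N). unfold Rdist in HN.
  apply Rabs_def2 in HN. lra.
Qed.

Lemma sum_f_R0_le (u v : nat -> R) n :
  (forall k, u k <= v k) -> sum_f_R0 u n <= sum_f_R0 v n.
Proof. intros H; induction n; simpl; [apply H|]. specialize (H (S n)); lra. Qed.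

Lemma sum_f_R0_nonneg_incr (u : nat -> R) n m :
  (forall k, 0 <= u k) -> (n <= m)%nat -> sum_f_R0 u n <= sum_f_R0 u m.
Proof.
  intros H Hnm; induction Hnm; [lra|]. simpl. specialize (H (S m)); lra.
Qed.

Lemma partial_le_lim (u : nat -> R) (l : R) n :
  (forall k, 0 <= u k) -> infinite_sum u l -> sum_f_R0 u n <= l.
Proof.
  intros H Hu. destruct (Rle_dec (sum_f_R0 u n) l) as [|Hc]; auto.
  apply Rnot_le_lt in Hc. destruct (Hu (sum_f_R0 u n - l)) as [N HN]; [lra|].
  specialize (HN (max N n) (Nat.le_max_l _ _)). unfold Rdist in HN.
  apply Rabs_def2 in HN.
  pose proof (sum_f_R0_nonneg_incr u n (max N n) H (Nat.le_max_r _ _)). lra.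
Qed.

Lemma infinite_sum_plus (u v : nat -> R) a b :
  infinite_sum u a -> infinite_sum v b -> infinite_sum (fun k => u k + v k) (a + b).
Proof.
  intros Hu Hv. assert (H := CV_plus _ _ _ _ Hu Hv).
  intros eps He. destruct (H eps He) as [N HN]. exists N; intros n Hn.
  rewrite sum_plus. apply HN; auto.
Qed.

Lemma infinite_sum_scal (u : nat -> R) a c :
  infinite_sum u a -> infinite_sum (fun k => u k * c) (a * c).
Proof.
  intros Hu. assert (Hc : Un_cv (fun _ => c) c).
  { intros eps He; exists 0%nat; intros; unfold Rdist; rewrite Rminus_diag, Rabs_R0; lra. }
  assert (H := CV_mult _ _ _ _ Hu Hc).
  intros eps He. destruct (H eps He) as [N HN]. exists N; intros n Hn.
  replace (sum_f_R0 (fun k => u k * c) n) with (sum_f_R0 u n * c). apply HN; auto.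
  clear Hn HN. induction n; simpl; [auto|]. rewrite <- IHn; ring.
Qed.

Lemma infinite_sum_ext (u v : nat -> R) a :
  (forall k, u k = v k) -> infinite_sum u a -> infinite_sum v a.
Proof.
  intros H Hu. replace v with u; auto. apply functional_extensionality; auto.
Qed.

Lemma nonneg_bounded_sum (u : nat -> R) (Sb : R) :
  (forall k, 0 <= u k) -> (forall n, sum_f_R0 u n <= Sb) -> exists l, infinite_sum u l.
Proof.
  intros H HS. destruct (growing_cv (sum_f_R0 u)) as [l Hl].
  - intro n; simpl. specialize (H (S n)); lra.
  - exists Sb; intros x [n ->]; auto.
  - exists l; exact Hl.
Qed.

Lemma infinite_sum_finite (u : nat -> R) N :
  (forall k, (N < k)%nat -> u k = 0) -> infinite_sum u (sum_f_R0 u N).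
Proof.
  intros H eps He. exists N. intros n Hn. unfold Rdist.
  replace (sum_f_R0 u n) with (sum_f_R0 u N). rewrite Rminus_diag, Rabs_R0; lra.
  induction Hn; auto. simpl. rewrite H by lia. lra.
Qed.

Lemma meas_spec {T} (dec : nat -> T) (f : T -> R) (A : T -> bool) :
  is_prob_mass dec f ->
  infinite_sum (fun k => if A (dec k) then f (dec k) else 0) (meas dec f A).
Proof.
  intros [Hpos Hsum]. unfold meas. apply (epsilon_spec (inhabits 0%R) (fun r => infinite_sum (fun k => if A (dec k) then f (dec k) else 0) r)).
  apply nonneg_bounded_sum with 1.
  - intro k; destruct (A (dec k)); [apply Hpos|lra].
  - intro n. eapply Rle_trans; [|apply (partial_le_lim _ _ n (fun k => Hpos (dec k)) Hsum)].
    apply sum_f_R0_le. intro k; destruct (A (dec k)); [lra|apply Hpos].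
Qed.

Lemma meas_nonneg {T} (dec : nat -> T) (f : T -> R) (A : T -> bool) : is_prob_mass dec f -> 0 <= meas dec f A.
Proof.
  intros Hf. pose proof (meas_spec dec f A Hf) as H. destruct Hf as [Hpos _].
  assert (Hn : forall n, 0 <= sum_f_R0 (fun k => if A (dec k) then f (dec k) else 0) n).
  { intro n; induction n; simpl; destruct (A (dec _)); try apply Hpos; try lra.
    specialize (Hpos (dec (S n))); lra. }
  destruct (Rle_dec 0 (meas dec f A)) as [|Hc]; auto. apply Rnot_le_lt in Hc.
  destruct (H (- meas dec f A)) as [N HN]; [lra|]. specialize (HN N (le_n _)).
  unfold Rdist in HN. apply Rabs_def2 in HN. specialize (Hn N). lra.
Qed.

Lemma meas_compl {T} (dec : nat -> T) (f : T -> R) (A : T -> bool) : is_prob_mass dec f ->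
  meas dec f (fun y => negb (A y)) = 1 - meas dec f A.
Proof.
  intros Hf. pose proof (meas_spec dec f A Hf) as H1.
  pose proof (meas_spec dec f (fun y => negb (A y)) Hf) as H2.
  pose proof (infinite_sum_plus _ _ _ _ H1 H2) as H3.
  destruct Hf as [_ Hs].
  assert (meas dec f A + meas dec f (fun y => negb (A y)) = 1).
  { eapply uniqueness_sum; [exact H3|]. eapply infinite_sum_ext; [|exact Hs].
    intro k; simpl. destruct (A (dec k)); simpl; lra. }
  lra.
Qed.

Lemma meas_le1 {T} (dec : nat -> T) (f : T -> R) (A : T -> bool) : is_prob_mass dec f -> meas dec f A <= 1.
Proof.
  intros Hf. pose proof (meas_compl dec f A Hf).
  pose proof (meas_nonneg dec f (fun y => negb (A y)) Hf). lra.
Qed.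


Lemma set_ext {Om} (E E' : Om -> Prop) : (forall w, E w <-> E' w) -> E = E'.
Proof. intro H; apply functional_extensionality; intro w; apply propositional_extensionality; auto. Qed.


Lemma F_ext {Om} (F : (Om -> Prop) -> Prop) E E' : F E -> (forall w, E w <-> E' w) -> F E'.
Proof. intros H H'; rewrite <- (set_ext _ _ H'); auto. Qed.

Lemma P_ext {Om} (P : (Om -> Prop) -> R) E E' : (forall w, E w <-> E' w) -> P E = P E'.
Proof. intros H'; rewrite (set_ext _ _ H'); auto. Qed.

Lemma F_full {Om} F P : @probability Om F P -> F (fun _ => True).
Proof. intros HP; apply (sa_full _ (pr_sa _ _ HP)). Qed.

Lemma F_compl {Om} F P E : @probability Om F P -> F E -> F (fun w => ~ E w).
Proof. intros HP; apply (sa_compl _ (pr_sa _ _ HP)). Qed.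

Lemma F_cunion {Om} F P (E : nat -> Om -> Prop) : @probability Om F P -> (forall n, F (E n)) ->
  F (fun w => exists n, E n w).
Proof. intros HP; apply (sa_union _ (pr_sa _ _ HP)). Qed.

Lemma F_empty {Om} F P : @probability Om F P -> F (fun _ => False).
Proof. intros HP. eapply F_ext; [apply (F_compl F P _ HP (F_full F P HP))|]. tauto. Qed.

Lemma F_union2 {Om} F P A B : @probability Om F P -> F A -> F B -> F (fun w => A w \/ B w).
Proof.
  intros HP HA HB. eapply F_ext; [apply (F_cunion F P (fun n => match n with 0%nat => A | _ => B end) HP)|].
  - intros [|n]; auto.
  - intro w; split; [intros [[|n] H]; auto|intros [H|H]; [exists 0%nat|exists 1%nat]; auto].
Qed.

Lemma F_inter2 {Om} F P A B : @probability Om F P -> F A -> F B -> F (fun w => A w /\ B w).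
Proof.
  intros HP HA HB. eapply F_ext; [apply (F_compl F P _ HP (F_union2 F P _ _ HP (F_compl F P _ HP HA) (F_compl F P _ HP HB)))|].
  intro w; tauto.
Qed.

Lemma F_cinter {Om} F P (E : nat -> Om -> Prop) : @probability Om F P -> (forall n, F (E n)) ->
  F (fun w => forall n, E n w).
Proof.
  intros HP HE. eapply F_ext; [apply (F_compl F P _ HP (F_cunion F P (fun n w => ~ E n w) HP (fun n => F_compl F P _ HP (HE n))))|].
  intro w; split; [intros H n; apply NNPP; intro Hn; apply H; eauto|intros H [n Hn]; auto].
Qed.

Lemma F_const {Om} F P (Q : Prop) : @probability Om F P -> F (fun _ => Q).
Proof.
  intros HP. destruct (classic Q) as [H|H].
  - eapply F_ext; [apply (F_full F P HP)|]; tauto.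
  - eapply F_ext; [apply (F_empty F P HP)|]; tauto.
Qed.

Lemma P_empty {Om} F P : @probability Om F P -> P (fun _ => False) = 0.
Proof.
  intros HP. pose proof (pr_additive _ _ HP (fun _ _ => False) (fun _ => F_empty F P HP)) as H.
  simpl in H. specialize (H (fun _ _ _ _ x _ => x)). rewrite (P_ext P (fun w => exists _ : nat, False) (fun _ => False)) in H
    by (intro; split; [intros [_ []]|tauto]).
  set (c := P (fun _ => False)) in *.
  assert (Hs : forall n, sum_f_R0 (fun _ => c) n = INR (S n) * c).
  { induction n; simpl sum_f_R0; [simpl; ring|]. rewrite IHn, !S_INR; ring. }
  destruct (Req_dec c 0) as [|Hc]; auto.
  destruct (H (Rabs c / 2)) as [N HN]; [pose proof (Rabs_pos_lt c Hc); lra|].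
  assert (H1 := HN N (le_n _)). assert (H2 := HN (S N) (le_S _ _ (le_n _))).
  unfold Rdist in H1, H2. rewrite Hs in H1, H2. rewrite (S_INR (S N)) in H2.
  assert (Rabs c <= Rabs (INR (S N) * c - c) + Rabs ((INR (S N) + 1) * c - c)).
  { replace c with (-(INR (S N) * c - c) + ((INR (S N) + 1) * c - c)) at 1 by ring.
    eapply Rle_trans; [apply Rabs_triang|]. rewrite Rabs_Ropp; lra. }
  lra.
Qed.

Lemma P_add2 {Om} F P A B : @probability Om F P -> F A -> F B -> (forall w, A w -> B w -> False) ->
  P (fun w => A w \/ B w) = P A + P B.
Proof.
  intros HP HA HB Hd.
  set (E := fun n : nat => match n with 0%nat => A | 1%nat => B | _ => fun _ => False end).
  assert (HE : forall n, F (E n)) by (intros [|[|n]]; simpl; auto; apply (F_empty F P HP)).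
  pose proof (pr_additive _ _ HP E HE) as H.
  assert (Hd' : forall n m w, n <> m -> E n w -> E m w -> False).
  { intros [|[|n]] [|[|m]] w Hnm; simpl; try tauto; try lia; eauto. }
  specialize (H Hd').
  rewrite (P_ext P (fun w => exists n, E n w) (fun w => A w \/ B w)) in H.
  - eapply uniqueness_sum; [exact H|].
    replace (P A + P B) with (sum_f_R0 (fun n => P (E n)) 1) by (simpl; auto).
    apply infinite_sum_finite. intros [|[|k]] Hk; try lia. simpl. apply (P_empty F P HP).
  - intro w; split; [intros [[|[|n]] Hn]; simpl in Hn; tauto|intros [H1|H1]; [exists 0%nat|exists 1%nat]; auto].
Qed.

Lemma P_nonneg {Om} F P E : @probability Om F P -> F E -> 0 <= P E.
Proof. intros HP; apply (pr_nonneg _ _ HP). Qed.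

Lemma P_mono {Om} F P A B : @probability Om F P -> F A -> F B -> (forall w, A w -> B w) -> P A <= P B.
Proof.
  intros HP HA HB Hs.
  assert (HD : F (fun w => B w /\ ~ A w)) by (apply (F_inter2 F P); auto; apply (F_compl F P _ HP HA)).
  rewrite (P_ext P B (fun w => A w \/ (B w /\ ~ A w))) by (intro w; split; [intro; destruct (classic (A w)); tauto|intros [H|H]; auto; tauto]).
  rewrite (P_add2 F P) by (auto; tauto). pose proof (P_nonneg F P _ HP HD); lra.
Qed.

Lemma P_le1 {Om} F P A : @probability Om F P -> F A -> P A <= 1.
Proof. intros HP HA. rewrite <- (pr_full _ _ HP). apply (P_mono F P); auto. apply (F_full F P HP). Qed.

Lemma P_compl {Om} F P A : @probability Om F P -> F A -> P (fun w => ~ A w) = 1 - P A.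
Proof.
  intros HP HA. rewrite <- (pr_full _ _ HP).
  rewrite (P_ext P (fun _ => True) (fun w => A w \/ ~ A w)) by (intro w; split; auto; intros; apply classic).
  rewrite (P_add2 F P) by (auto; try apply (F_compl F P _ HP HA); tauto). ring.
Qed.

Lemma P_sub2 {Om} F P A B : @probability Om F P -> F A -> F B -> P (fun w => A w \/ B w) <= P A + P B.
Proof.
  intros HP HA HB.
  assert (HD : F (fun w => B w /\ ~ A w)) by (apply (F_inter2 F P); auto; apply (F_compl F P _ HP HA)).
  rewrite (P_ext P (fun w => A w \/ B w) (fun w => A w \/ (B w /\ ~ A w))) by (intro w; split; [intro; destruct (classic (A w)); tauto|intros [H|H]; tauto]).
  rewrite (P_add2 F P) by (auto; tauto).
  pose proof (P_mono F P _ _ HP HD HB (fun w H => proj1 H)). lra.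
Qed.

Lemma F_bunion {Om} F P (E : nat -> Om -> Prop) n : @probability Om F P -> (forall k, F (E k)) ->
  F (fun w => exists k, (k < n)%nat /\ E k w).
Proof.
  intros HP HE. eapply F_ext; [apply (F_cunion F P (fun k w => (k < n)%nat /\ E k w) HP)|]; [|intro; tauto].
  intro k. destruct (lt_dec k n) as [Hk|Hk].
  - eapply F_ext; [apply (HE k)|]; intro; tauto.
  - eapply F_ext; [apply (F_empty F P HP)|]; intro; tauto.
Qed.

Lemma P_bunion_le {Om} F P (E : nat -> Om -> Prop) n : @probability Om F P -> (forall k, F (E k)) ->
  P (fun w => exists k, (k <= n)%nat /\ E k w) <= sum_f_R0 (fun k => P (E k)) n.
Proof.
  intros HP HE. induction n.
  - rewrite (P_ext P _ (E 0%nat)) by (intro; split; [intros [k [Hk Hw]]; replace k with 0%nat in Hw by lia; auto|intro; exists 0%nat; auto]).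
    simpl; lra.
  - rewrite (P_ext P _ (fun w => (exists k, (k <= n)%nat /\ E k w) \/ E (S n) w)).
    + eapply Rle_trans; [apply (P_sub2 F P); auto; eapply F_ext; [apply (F_bunion F P E (S n) HP HE)|]; intro; split; intros [k Hk]; exists k; split; try tauto; lia|].
      simpl. lra.
    + intro w; split; [intros [k [Hk Hw]]; destruct (Nat.eq_dec k (S n)); [subst; auto|left; exists k; split; auto; lia]
                      |intros [[k [Hk Hw]]|Hw]; [exists k; split; auto|exists (S n); split; auto]].
Qed.

Lemma P_cunion_le {Om} F P (E : nat -> Om -> Prop) (Sb : R) : @probability Om F P -> (forall k, F (E k)) ->
  (forall n, sum_f_R0 (fun k => P (E k)) n <= Sb) -> P (fun w => exists k, E k w) <= Sb.
Proof.
  intros HP HE HS.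
  set (D := fun n w => E n w /\ ~ (exists k, (k < n)%nat /\ E k w)).
  assert (HD : forall n, F (D n)) by (intro n; apply (F_inter2 F P); auto; apply (F_compl F P _ HP); apply (F_bunion F P E n HP HE)).
  assert (Hdis : forall n m w, n <> m -> D n w -> D m w -> False).
  { intros n m w Hnm [H1 H2] [H3 H4]. destruct (lt_dec n m); [apply H4; eauto|apply H2; exists m; split; auto; lia]. }
  pose proof (pr_additive _ _ HP D HD Hdis) as H.
  rewrite (P_ext P (fun w => exists n, D n w) (fun w => exists k, E k w)) in H.
  - apply (sum_le_lim _ _ _ H). intro n. eapply Rle_trans; [|apply (HS n)].
    apply sum_f_R0_le. intro k. apply (P_mono F P); auto. intros w [Hw _]; auto.
  - intro w; split; [intros [n [Hn _]]; eauto|].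
    intros Hex. assert (Hm : exists n, E n w /\ forall k, (k < n)%nat -> ~ E k w).
    { destruct Hex as [n Hn]. revert Hn. induction n as [n IH] using (well_founded_induction lt_wf).
      intro Hn. destruct (classic (exists k, (k < n)%nat /\ E k w)) as [[k [Hk Ek]]|Hno].
      - apply (IH k Hk Ek).
      - exists n; split; auto. intros k Hk Ek; apply Hno; eauto. }
    destruct Hm as [n [Hn Hk]]. exists n; split; auto. intros [k [Hk' Ek]]; eapply Hk; eauto.
Qed.


Definition dep {T} (m : nat) (Q : (nat -> T) -> Prop) :=
  forall f g : nat -> T, (forall i, (i < m)%nat -> f i = g i) -> Q f -> Q g.

Lemma F_dep {Om T} (enc : T -> nat) (dec : nat -> T) (Henc : forall x, dec (enc x) = x)
  F P (HP : @probability Om F P) (X : nat -> Om -> T)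
  (HXF : forall k x, F (fun w => X k w = x)) :
  forall m Q, dep m Q -> F (fun w => Q (fun i => X i w)).
Proof.
  induction m; intros Q HQ.
  - destruct (classic (Q (fun _ => dec 0%nat))) as [H|H].
    + eapply F_ext; [apply (F_full F P HP)|]. intro w; split; auto; intros _.
      eapply HQ; [|exact H]. intros; lia.
    + eapply F_ext; [apply (F_empty F P HP)|]. intro w; split; [tauto|]. intro H'.
      apply H. eapply HQ; [|exact H']. intros; lia.
  - set (Q' := fun j (f : nat -> T) => Q (fun i => if Nat.eqb i m then dec j else f i)).
    assert (HQ' : forall j, dep m (Q' j)).
    { intros j f g Hfg H. unfold Q' in *. eapply HQ; [|exact H]. intros i Hi. cbv beta.
      destruct (Nat.eqb i m) eqn:E; auto. apply Nat.eqb_neq in E. apply Hfg; lia. }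
    eapply F_ext; [apply (F_cunion F P (fun j w => X m w = dec j /\ Q' j (fun i => X i w)) HP)|].
    + intro j. apply (F_inter2 F P); auto; apply (IHm _ (HQ' j)).
    + intro w; split.
      * intros [j [Hj HQj]]. unfold Q' in HQj. eapply HQ; [|exact HQj].
        intros i Hi. cbv beta. destruct (Nat.eqb i m) eqn:E; auto. apply Nat.eqb_eq in E; subst; auto.
      * intro H. exists (enc (X m w)). split; [rewrite Henc; auto|].
        unfold Q'. eapply HQ; [|exact H]. intros i Hi.
        cbv beta. destruct (Nat.eqb i m) eqn:E; auto. apply Nat.eqb_eq in E; subst. rewrite Henc; auto.
Qed.

Lemma list_bound (l : list nat) : exists m, forall k, In k l -> (k < m)%nat.
Proof.
  induction l as [|a l [m Hm]]; [exists 0%nat; intros k []|].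
  exists (S (max a m)). intros k [<-|Hk]; [lia|]. specialize (Hm k Hk); lia.
Qed.

Lemma dep_Forall {T} (l : list nat) (G : nat -> T -> Prop) :
  exists m, dep m (fun f => Forall (fun k => G k (f k)) l).
Proof.
  destruct (list_bound l) as [m Hm]. exists m. intros f g Hfg H.
  rewrite Forall_forall in *. intros k Hk. rewrite <- Hfg by auto. auto.
Qed.


Lemma F_Forall {Om T} (enc : T -> nat) (dec : nat -> T) (Henc : forall x, dec (enc x) = x)
  F P (HP : @probability Om F P) (X : nat -> Om -> T)
  (HXF : forall k x, F (fun w => X k w = x)) (l : list nat) (G : nat -> T -> Prop) :
  F (fun w => Forall (fun k => G k (X k w)) l).
Proof.
  destruct (dep_Forall l G) as [m Hm].
  apply (F_dep enc dec Henc F P HP X HXF m (fun f => Forall (fun k => G k (f k)) l) Hm).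
Qed.

Lemma indep {Om T} (enc : T -> nat) (dec : nat -> T) (Henc : forall x, dec (enc x) = x)
  (Hdec : forall k, enc (dec k) = k) (fmu : T -> R) (Hmu : is_prob_mass dec fmu)
  F P (HP : @probability Om F P) (X : nat -> Om -> T)
  (HXF : forall k x, F (fun w => X k w = x))
  (HXP : forall l xs, NoDup l -> P (fun w => Forall (fun k => X k w = xs k) l)
          = fold_right (fun k acc => fmu (xs k) * acc) 1 l) :
  forall ls lp xs (A : nat -> T -> bool), NoDup (ls ++ lp) ->
  P (fun w => Forall (fun k => A k (X k w) = true) ls /\ Forall (fun k => X k w = xs k) lp)
  = fold_right (fun k acc => meas dec fmu (A k) * acc) 1 ls * fold_right (fun k acc => fmu (xs k) * acc) 1 lp.
Proof.
  induction ls as [|k ls IH]; intros lp xs A Hnd.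
  - simpl. rewrite Rmult_1_l. rewrite <- (HXP lp xs Hnd). apply P_ext. intro w; split; [tauto|auto].
  - set (C := fold_right (fun k acc => meas dec fmu (A k) * acc) 1 ls * fold_right (fun k acc => fmu (xs k) * acc) 1 lp).
    set (E := fun j w => X k w = dec j /\ (A k (dec j) = true /\
               (Forall (fun k => A k (X k w) = true) ls /\ Forall (fun k => X k w = xs k) lp))).
    assert (HFF : forall l (G : nat -> T -> Prop), F (fun w => Forall (fun k => G k (X k w)) l))
      by (intros; apply (F_Forall enc dec Henc F P HP X HXF)).
    assert (HE : forall j, F (E j)).
    { intro j. unfold E. apply (F_inter2 F P _ _ HP); auto. apply (F_inter2 F P _ _ HP); [apply (F_const F P _ HP)|].
      apply (F_inter2 F P _ _ HP); [apply (HFF _ (fun k y => A k y = true))|apply (HFF _ (fun k y => y = xs k))]. }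
    assert (Hdis : forall n m w, n <> m -> E n w -> E m w -> False).
    { intros n m w Hnm [H1 _] [H2 _]. apply Hnm. rewrite <- (Hdec n), <- (Hdec m), <- H1, <- H2; auto. }
    assert (Hnd' : NoDup (ls ++ k :: lp)) by (eapply Permutation_NoDup; [apply Permutation_middle|exact Hnd]).
    assert (Hk : ~ In k lp).
    { intro Hin. apply NoDup_remove_2 in Hnd'. apply Hnd'. apply in_or_app; right; auto. }
    assert (HPE : forall j, P (E j) = (if A k (dec j) then fmu (dec j) else 0) * C).
    { intro j. destruct (A k (dec j)) eqn:Ej.
      - set (xs' := fun i => if Nat.eqb i k then dec j else xs i).
        rewrite (P_ext P (E j) (fun w => Forall (fun k => A k (X k w) = true) ls /\ Forall (fun k => X k w = xs' k) (k :: lp))).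
        + rewrite (IH (k :: lp) xs' A Hnd'). unfold C. simpl. unfold xs' at 1. rewrite Nat.eqb_refl.
          assert (Hl : fold_right (fun k0 acc => fmu (xs' k0) * acc) 1 lp = fold_right (fun k0 acc => fmu (xs k0) * acc) 1 lp).
          { clear -Hk. unfold xs'. induction lp as [|a lp IHl]; simpl; auto.
            destruct (Nat.eqb a k) eqn:Ea; [apply Nat.eqb_eq in Ea; subst; exfalso; apply Hk; left; auto|].
            rewrite IHl; auto. intro; apply Hk; right; auto. }
          rewrite Hl. ring.
        + intro w. unfold E. rewrite Forall_cons_iff. unfold xs' at 1. rewrite Nat.eqb_refl.
          assert (Hf : Forall (fun k0 => X k0 w = xs' k0) lp <-> Forall (fun k0 => X k0 w = xs k0) lp).
          { rewrite !Forall_forall. split; intros H x Hx; specialize (H x Hx); unfold xs' in *;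
            destruct (Nat.eqb x k) eqn:Ex; auto; apply Nat.eqb_eq in Ex; subst; contradiction. }
          rewrite Hf. tauto.
      - rewrite (P_ext P (E j) (fun _ => False)) by (unfold E; intro; split; [intros [_ [H _]]; congruence|tauto]).
        rewrite (P_empty F P HP). ring. }
    pose proof (pr_additive _ _ HP E HE Hdis) as Hadd.
    rewrite (P_ext P (fun w => exists n, E n w)
      (fun w => Forall (fun k => A k (X k w) = true) (k :: ls) /\ Forall (fun k => X k w = xs k) lp)) in Hadd.
    + eapply uniqueness_sum; [exact Hadd|]. simpl.
      replace (meas dec fmu (A k) * fold_right (fun k0 acc => meas dec fmu (A k0) * acc) 1 ls *
               fold_right (fun k0 acc => fmu (xs k0) * acc) 1 lp) with (meas dec fmu (A k) * C) by (unfold C; ring).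
      apply (infinite_sum_ext (fun j => (if A k (dec j) then fmu (dec j) else 0) * C)).
      * intro j; rewrite HPE; auto.
      * apply infinite_sum_scal. apply meas_spec; auto.
    + intro w. rewrite Forall_cons_iff. unfold E. split.
      * intros [j [H1 [H2 H3]]]. rewrite H1; tauto.
      * intros [[H1 H2] H3]. exists (enc (X k w)). rewrite Henc. tauto.
Qed.


Definition Wt (p : R) (b : list bool) : R := fold_right (fun (x : bool) acc => (if x then p else 1 - p) * acc) 1 b.
Definition cnt (b : list bool) : R := fold_right (fun (x : bool) acc => (if x then 1 else 0) + acc) 0 b.
Definition Psi (mu : R) (b : list bool) : R := fold_right (fun (x : bool) acc => (if x then exp mu else 1) * acc) 1 b.
Fixpoint blists (n : nat) : list (list bool) :=
  match n with 0%nat => nil :: nil | S n => map (cons true) (blists n) ++ map (cons false) (blists n) end.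
Definition sumL (g : list bool -> R) (L : list (list bool)) : R := fold_right (fun b acc => g b + acc) 0 L.

Lemma blists_In n b : In b (blists n) <-> length b = n.
Proof.
  revert b; induction n; intro b; simpl.
  - split; [intros [<-|[]]; auto|destruct b; simpl; try lia; auto].
  - rewrite in_app_iff, !in_map_iff. split.
    + intros [[b' [<- H]]|[b' [<- H]]]; simpl; f_equal; apply IHn; auto.
    + destruct b as [|x b]; simpl; [lia|]. intro H. injection H; intro H'.
      destruct x; [left|right]; exists b; split; auto; apply IHn; auto.
Qed.

Lemma blists_NoDup n : NoDup (blists n).
Proof.
  induction n; simpl; [constructor; [intros []|constructor]|].
  apply NoDup_app.
  - apply FinFun.Injective_map_NoDup; auto. intros x y H; injection H; auto.
  - apply FinFun.Injective_map_NoDup; auto. intros x y H; injection H; auto.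
  - intros a H1 H2. apply in_map_iff in H1, H2. destruct H1 as [? [<- _]]. destruct H2 as [? [H _]]. discriminate.
Qed.

Lemma sumL_app g L1 L2 : sumL g (L1 ++ L2) = sumL g L1 + sumL g L2.
Proof. induction L1; simpl; [ring|]. unfold sumL in *; simpl. rewrite IHL1; ring. Qed.

Lemma sumL_ext g1 g2 L : (forall b, g1 b = g2 b) -> sumL g1 L = sumL g2 L.
Proof. intro H; induction L; simpl; auto. unfold sumL in *; simpl; rewrite IHL, H; auto. Qed.

Lemma sumL_plus g1 g2 L : sumL (fun b => g1 b + g2 b) L = sumL g1 L + sumL g2 L.
Proof. induction L; simpl; [unfold sumL; simpl; ring|]. unfold sumL in *; simpl; rewrite IHL; ring. Qed.

Lemma sumL_scal c g L : sumL (fun b => c * g b) L = c * sumL g L.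
Proof. induction L; simpl; [unfold sumL; simpl; ring|]. unfold sumL in *; simpl; rewrite IHL; ring. Qed.

Lemma sumL_map_cons g x L : sumL g (map (cons x) L) = sumL (fun b => g (x :: b)) L.
Proof. induction L; simpl; auto. unfold sumL in *; simpl; rewrite IHL; auto. Qed.

Lemma Wt_nonneg p b : 0 <= p <= 1 -> 0 <= Wt p b.
Proof. intro Hp; induction b; simpl; [lra|]. destruct a; apply Rmult_le_pos; lra. Qed.

Lemma gen_fun p mu n : sumL (fun b => Wt p b * Psi mu b) (blists n) = (p * exp mu + (1 - p)) ^ n.
Proof.
  induction n; simpl; [unfold sumL, Wt, Psi; simpl; ring|].
  rewrite sumL_app, !sumL_map_cons. simpl.
  rewrite (sumL_ext (fun b => p * fold_right (fun (x : bool) acc => (if x then p else 1 - p) * acc) 1 b *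
            (exp mu * fold_right (fun (x : bool) acc => (if x then exp mu else 1) * acc) 1 b))
            (fun b => (p * exp mu) * (Wt p b * Psi mu b))) by (intro; unfold Wt, Psi; ring).
  rewrite (sumL_ext (fun b => (1 - p) * fold_right (fun (x : bool) acc => (if x then p else 1 - p) * acc) 1 b *
            (1 * fold_right (fun (x : bool) acc => (if x then exp mu else 1) * acc) 1 b))
            (fun b => (1 - p) * (Wt p b * Psi mu b))) by (intro; unfold Wt, Psi; ring).
  rewrite !sumL_scal, IHn. ring.
Qed.

Lemma Psi_exp mu b : Psi mu b = exp (mu * cnt b).
Proof.
  induction b; simpl; unfold Psi, cnt in *; simpl.
  - rewrite Rmult_0_r, exp_0; auto.
  - rewrite IHb. destruct a.
    + rewrite Rmult_plus_distr_l, exp_plus, Rmult_1_r; auto.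
    + rewrite Rplus_0_l; ring.
Qed.

Lemma sumL_filter_le (f : list bool -> bool) h g L :
  (forall b, 0 <= h b) -> (forall b, 0 <= g b) -> (forall b, f b = true -> 1 <= g b) ->
  sumL h (filter f L) <= sumL (fun b => h b * g b) L.
Proof.
  intros Hh Hg Hf. induction L as [|b L IH]; simpl; [unfold sumL; simpl; lra|].
  unfold sumL in *; simpl. destruct (f b) eqn:E; simpl.
  - specialize (Hf b E). pose proof (Hh b). assert (h b <= h b * g b) by nra. lra.
  - pose proof (Rmult_le_pos _ _ (Hh b) (Hg b)). lra.
Qed.

Lemma exp_quad mu : -1/2 <= mu <= 1/2 -> exp mu <= 1 + mu + 2 * mu ^ 2.
Proof.
  intro Hm. pose proof (exp_ineq1_le (- mu)) as H1.
  assert (Hpos : 0 < 1 - mu) by lra.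
  assert (exp mu * exp (- mu) = 1) by (rewrite <- exp_plus, Rplus_opp_r, exp_0; auto).
  pose proof (exp_pos mu).
  assert (exp mu * (1 - mu) <= 1) by nra.
  assert (1 <= (1 + mu + 2 * mu ^ 2) * (1 - mu)) by nra.
  nra.
Qed.

Lemma mgf_bound p mu : 0 <= p <= 1 -> -1/2 <= mu <= 1/2 ->
  p * exp mu + (1 - p) <= exp (p * mu + 2 * mu ^ 2).
Proof.
  intros Hp Hm. pose proof (exp_quad mu Hm). pose proof (exp_ineq1_le (p * mu + 2 * mu ^ 2)).
  assert (p * (2 * mu ^ 2) <= 2 * mu ^ 2) by nra. nra.
Qed.

Lemma exp_pow a n : exp a ^ n = exp (INR n * a).
Proof.
  induction n; simpl; [rewrite Rmult_0_l, exp_0; auto|].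
  rewrite IHn, <- exp_plus. f_equal. destruct n; simpl; ring.
Qed.

Lemma chernoff_sum p n delta : 0 <= p <= 1 -> 0 < delta <= 1 ->
  sumL (fun b => Wt p b * (exp ((delta/4) * (cnt b - INR n * p - INR n * delta))
                              + exp (- (delta/4) * (cnt b - INR n * p + INR n * delta)))) (blists n)
  <= 2 * exp (- (INR n * delta ^ 2 / 8)).
Proof.
  intros Hp Hd. set (l := delta / 4).
  rewrite (sumL_ext _ (fun b => exp (- l * (INR n * p + INR n * delta)) * (Wt p b * Psi l b)
                                + exp (l * (INR n * p - INR n * delta)) * (Wt p b * Psi (- l) b))).
  2:{ intro b. rewrite !Psi_exp.
      assert (E1 : exp (l * (cnt b - INR n * p - INR n * delta)) = exp (- l * (INR n * p + INR n * delta)) * exp (l * cnt b))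
        by (rewrite <- exp_plus; f_equal; ring).
      assert (E2 : exp (- l * (cnt b - INR n * p + INR n * delta)) = exp (l * (INR n * p - INR n * delta)) * exp (- l * cnt b))
        by (rewrite <- exp_plus; f_equal; ring).
      unfold l in *. rewrite E1, E2. ring. }
  rewrite sumL_plus, !sumL_scal, !gen_fun.
  assert (H1 : (p * exp l + (1 - p)) ^ n <= exp (p * l + 2 * l ^ 2) ^ n).
  { apply pow_incr. split; [pose proof (exp_pos l); nra|apply mgf_bound; unfold l; lra]. }
  assert (H2 : (p * exp (-l) + (1 - p)) ^ n <= exp (p * (-l) + 2 * (-l) ^ 2) ^ n).
  { apply pow_incr. split; [pose proof (exp_pos (-l)); nra|apply mgf_bound; unfold l; lra]. }
  rewrite exp_pow in H1, H2.
  pose proof (exp_pos (- l * (INR n * p + INR n * delta))). pose proof (exp_pos (l * (INR n * p - INR n * delta))).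
  apply Rmult_le_compat_l with (r := exp (- l * (INR n * p + INR n * delta))) in H1; [|lra].
  apply Rmult_le_compat_l with (r := exp (l * (INR n * p - INR n * delta))) in H2; [|lra].
  rewrite <- exp_plus in H1, H2.
  replace (- l * (INR n * p + INR n * delta) + INR n * (p * l + 2 * l ^ 2)) with (- (INR n * delta ^ 2 / 8)) in H1 by (unfold l; field).
  replace (l * (INR n * p - INR n * delta) + INR n * (p * - l + 2 * (- l) ^ 2)) with (- (INR n * delta ^ 2 / 8)) in H2 by (unfold l; field).
  lra.
Qed.


Definition bw {Om T} (A : T -> bool) (X : nat -> Om -> T) (n : nat) (w : Om) : list bool :=
  map (fun i => A (X i w)) (seq 0 n).

Lemma map_seq_iff (b : list bool) : forall s (g : nat -> bool),
  map g (seq s (length b)) = b <-> Forall (fun k => Bool.eqb (g k) (nth (k - s) b false) = true) (seq s (length b)).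
Proof.
  induction b as [|x b IH]; intros s g; simpl; [split; auto|].
  rewrite Forall_cons_iff, Nat.sub_diag. simpl.
  assert (Ht : Forall (fun k => Bool.eqb (g k) (nth (k - s) (x :: b) false) = true) (seq (S s) (length b)) <->
               Forall (fun k => Bool.eqb (g k) (nth (k - S s) b false) = true) (seq (S s) (length b))).
  { rewrite !Forall_forall. split; intros H k Hk; specialize (H k Hk); apply in_seq in Hk;
    replace (k - s)%nat with (S (k - S s)) in * by lia; auto. }
  rewrite Ht, <- IH. split.
  - intro H; injection H; intros H1 H2; rewrite H1, H2; split; auto. destruct x; auto.
  - intros [H1 H2]. rewrite H2. f_equal. destruct (g s), x; auto; discriminate.
Qed.

Lemma fold_prod_ext (f g : nat -> R) l : (forall k, In k l -> f k = g k) ->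
  fold_right (fun k acc => f k * acc) 1 l = fold_right (fun k acc => g k * acc) 1 l.
Proof.
  induction l; intro H; simpl; auto. rewrite H by (left; auto). rewrite IHl; auto.
  intros k Hk; apply H; right; auto.
Qed.

Lemma prod_seq {T} (dec : nat -> T) (fmu : T -> R) (Hmu : is_prob_mass dec fmu) (A : T -> bool) (b : list bool) :
  forall s, fold_right (fun k acc => meas dec fmu (fun y => Bool.eqb (A y) (nth (k - s) b false)) * acc) 1 (seq s (length b))
  = Wt (meas dec fmu A) b.
Proof.
  induction b as [|x b IH]; intro s; simpl; auto.
  rewrite Nat.sub_diag. simpl. unfold Wt in *. rewrite <- (IH (S s)).
  rewrite (fold_prod_ext _ (fun k => meas dec fmu (fun y => Bool.eqb (A y) (nth (k - S s) b false)))).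
  2:{ intros k Hk. apply in_seq in Hk. replace (k - s)%nat with (S (k - S s)) by lia. auto. }
  f_equal.
  destruct x.
  + replace (fun y => Bool.eqb (A y) true) with A; auto. apply functional_extensionality; intro y; destruct (A y); auto.
  + rewrite <- meas_compl by auto. replace (fun y => Bool.eqb (A y) false) with (fun y => negb (A y)); auto.
Qed.

Lemma F_bw {Om T} (enc : T -> nat) (dec : nat -> T) (Henc : forall x, dec (enc x) = x)
  F P (HP : @probability Om F P) (X : nat -> Om -> T)
  (HXF : forall k x, F (fun w => X k w = x)) (A : T -> bool) n (Q : list bool -> Prop) :
  F (fun w => Q (bw A X n w)).
Proof.
  apply (F_dep enc dec Henc F P HP X HXF n (fun f => Q (map (fun i => A (f i)) (seq 0 n)))).
  intros f g Hfg H. replace (map (fun i => A (g i)) (seq 0 n)) with (map (fun i => A (f i)) (seq 0 n)); auto.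
  apply map_ext_in. intros i Hi. apply in_seq in Hi. rewrite Hfg; auto; lia.
Qed.

Lemma atom_prob {Om T} (enc : T -> nat) (dec : nat -> T) (Henc : forall x, dec (enc x) = x)
  (Hdec : forall k, enc (dec k) = k) (fmu : T -> R) (Hmu : is_prob_mass dec fmu)
  F P (HP : @probability Om F P) (X : nat -> Om -> T)
  (HXF : forall k x, F (fun w => X k w = x))
  (HXP : forall l xs, NoDup l -> P (fun w => Forall (fun k => X k w = xs k) l)
          = fold_right (fun k acc => fmu (xs k) * acc) 1 l) (A : T -> bool) (b : list bool) :
  P (fun w => bw A X (length b) w = b) = Wt (meas dec fmu A) b.
Proof.
  pose proof (indep enc dec Henc Hdec fmu Hmu F P HP X HXF HXP (seq 0 (length b)) nil (fun _ => dec 0%nat)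
     (fun k y => Bool.eqb (A y) (nth (k - 0) b false))) as H.
  rewrite app_nil_r in H. specialize (H (seq_NoDup _ _)). simpl in H. rewrite Rmult_1_r in H.
  rewrite (prod_seq dec fmu Hmu A b 0) in H. rewrite <- H. apply P_ext. intro w.
  unfold bw. rewrite (map_seq_iff b 0 (fun i => A (X i w))). split; [intro; split; auto|tauto].
Qed.

Lemma union_atoms {Om T} (enc : T -> nat) (dec : nat -> T) (Henc : forall x, dec (enc x) = x)
  (Hdec : forall k, enc (dec k) = k) (fmu : T -> R) (Hmu : is_prob_mass dec fmu)
  F P (HP : @probability Om F P) (X : nat -> Om -> T)
  (HXF : forall k x, F (fun w => X k w = x))
  (HXP : forall l xs, NoDup l -> P (fun w => Forall (fun k => X k w = xs k) l)
          = fold_right (fun k acc => fmu (xs k) * acc) 1 l) (A : T -> bool) n :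
  forall L, NoDup L -> (forall b, In b L -> length b = n) ->
  P (fun w => In (bw A X n w) L) = sumL (Wt (meas dec fmu A)) L.
Proof.
  induction L as [|b L IH]; intros Hnd Hl.
  - rewrite (P_ext P _ (fun _ => False)) by (intro; simpl; tauto). apply (P_empty F P HP).
  - inversion Hnd; subst.
    rewrite (P_ext P _ (fun w => bw A X n w = b \/ In (bw A X n w) L)) by (intro; simpl; split; intros [H|H]; auto).
    rewrite (P_add2 F P).
    + rewrite IH; auto; [|intros; apply Hl; right; auto]. unfold sumL; simpl. f_equal.
      rewrite <- (Hl b) by (left; auto). apply (atom_prob enc dec Henc Hdec fmu Hmu F P HP X HXF HXP).
    + auto.
    + apply (F_bw enc dec Henc F P HP X HXF A n (fun c => c = b)).
    + apply (F_bw enc dec Henc F P HP X HXF A n (fun c => In c L)).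
    + intros w Hw1 Hw2. rewrite Hw1 in Hw2. contradiction.
Qed.

Lemma bw_length {Om T} (A : T -> bool) (X : nat -> Om -> T) n w : length (bw A X n w) = n.
Proof. unfold bw. rewrite length_map, length_seq; auto. Qed.

Lemma event_bound {Om T} (enc : T -> nat) (dec : nat -> T) (Henc : forall x, dec (enc x) = x)
  (Hdec : forall k, enc (dec k) = k) (fmu : T -> R) (Hmu : is_prob_mass dec fmu)
  F P (HP : @probability Om F P) (X : nat -> Om -> T)
  (HXF : forall k x, F (fun w => X k w = x))
  (HXP : forall l xs, NoDup l -> P (fun w => Forall (fun k => X k w = xs k) l)
          = fold_right (fun k acc => fmu (xs k) * acc) 1 l) (A : T -> bool) n
  (Q : list bool -> Prop) (g : list bool -> R) :
  (forall b, 0 <= g b) -> (forall b, Q b -> 1 <= g b) ->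
  P (fun w => Q (bw A X n w)) <= sumL (fun b => Wt (meas dec fmu A) b * g b) (blists n).
Proof.
  intros Hg HQ.
  set (f := fun b => if excluded_middle_informative (Q b) then true else false).
  rewrite (P_ext P _ (fun w => In (bw A X n w) (filter f (blists n)))).
  - rewrite (union_atoms enc dec Henc Hdec fmu Hmu F P HP X HXF HXP A n).
    + apply sumL_filter_le; auto.
      * intro; apply Wt_nonneg. split; [apply meas_nonneg|apply meas_le1]; auto.
      * intros b Hb. unfold f in Hb. destruct (excluded_middle_informative (Q b)); auto; discriminate.
    + apply NoDup_filter, blists_NoDup.
    + intros b Hb. apply filter_In in Hb. apply blists_In; tauto.
  - intro w. rewrite filter_In, blists_In, bw_length. unfold f.
    destruct (excluded_middle_informative (Q (bw A X n w))); split; try tauto; intros [_ H]; discriminate.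
Qed.


Lemma chernoff {Om T} (enc : T -> nat) (dec : nat -> T) (Henc : forall x, dec (enc x) = x)
  (Hdec : forall k, enc (dec k) = k) (fmu : T -> R) (Hmu : is_prob_mass dec fmu)
  F P (HP : @probability Om F P) (X : nat -> Om -> T)
  (HXF : forall k x, F (fun w => X k w = x))
  (HXP : forall l xs, NoDup l -> P (fun w => Forall (fun k => X k w = xs k) l)
          = fold_right (fun k acc => fmu (xs k) * acc) 1 l) (A : T -> bool) n delta :
  0 < delta <= 1 ->
  P (fun w => INR n * delta <= Rabs (cnt (bw A X n w) - INR n * meas dec fmu A))
  <= 2 * exp (- (INR n * delta ^ 2 / 8)).
Proof.
  intro Hd. set (p := meas dec fmu A).
  assert (Hp : 0 <= p <= 1) by (split; [apply meas_nonneg|apply meas_le1]; auto).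
  eapply Rle_trans; [|apply (chernoff_sum p n delta Hp Hd)].
  apply (event_bound enc dec Henc Hdec fmu Hmu F P HP X HXF HXP A n
    (fun b => INR n * delta <= Rabs (cnt b - INR n * p))
    (fun b => exp ((delta / 4) * (cnt b - INR n * p - INR n * delta)) + exp (- (delta / 4) * (cnt b - INR n * p + INR n * delta)))).
  - intro b. pose proof (exp_pos ((delta / 4) * (cnt b - INR n * p - INR n * delta))).
    pose proof (exp_pos (- (delta / 4) * (cnt b - INR n * p + INR n * delta))). lra.
  - intros b Hb. pose proof (exp_pos ((delta / 4) * (cnt b - INR n * p - INR n * delta))).
    pose proof (exp_pos (- (delta / 4) * (cnt b - INR n * p + INR n * delta))).
    destruct (Rle_dec 0 (cnt b - INR n * p)) as [Hc0|Hc0].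
    + rewrite Rabs_right in Hb by lra.
      pose proof (exp_ineq1_le ((delta / 4) * (cnt b - INR n * p - INR n * delta))).
      assert (0 <= (delta / 4) * (cnt b - INR n * p - INR n * delta)) by (apply Rmult_le_pos; lra). lra.
    + rewrite Rabs_left in Hb by lra.
      pose proof (exp_ineq1_le (- (delta / 4) * (cnt b - INR n * p + INR n * delta))).
      assert (0 <= - (delta / 4) * (cnt b - INR n * p + INR n * delta)).
      { replace (- (delta / 4) * (cnt b - INR n * p + INR n * delta)) with ((delta/4) * (- (cnt b - INR n * p) - INR n * delta)) by ring.
        apply Rmult_le_pos; lra. }
      lra.
Qed.

Lemma cnt_app l1 l2 : cnt (l1 ++ l2) = cnt l1 + cnt l2.
Proof. induction l1; unfold cnt in *; simpl; [ring|]. rewrite IHl1; ring. Qed.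

Lemma cnt_nonneg l : 0 <= cnt l.
Proof. induction l; unfold cnt in *; simpl; [lra|]. destruct a; lra. Qed.

Lemma cnt_sum {Om T} (A : T -> bool) (X : nat -> Om -> T) m w :
  sum_f_R0 (fun i => if A (X i w) then 1 else 0) m = cnt (bw A X (S m) w).
Proof.
  unfold bw. induction m.
  - simpl. unfold cnt; simpl. ring.
  - rewrite seq_S, map_app, cnt_app, <- IHm. simpl. unfold cnt; simpl. ring.
Qed.

Lemma emp_cnt {Om T} (A : T -> bool) (X : nat -> Om -> T) n w :
  (1 <= n)%nat -> emp X n w A = cnt (bw A X n w) / INR n.
Proof.
  intro Hn. unfold emp. destruct n; [lia|]. simpl pred. rewrite cnt_sum. unfold Rdiv; ring.
Qed.

Fixpoint fsum (g : nat -> R) (K : nat) : R := match K with 0%nat => 0 | S K => fsum g K + g K end.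

Lemma fsum_indic (lab : nat -> nat) (v : R) K y : 0 <= v ->
  fsum (fun j => if Nat.eqb (lab y) j then v else 0) K <= v.
Proof.
  intro Hv. assert (forall K, fsum (fun j => if Nat.eqb (lab y) j then v else 0) K = if Nat.ltb (lab y) K then v else 0).
  { induction K0; simpl; auto. rewrite IHK0. destruct (Nat.ltb_spec (lab y) K0), (Nat.ltb_spec (lab y) (S K0)), (Nat.eqb_spec (lab y) K0); try lia; lra. }
  rewrite H. destruct (Nat.ltb _ _); lra.
Qed.

Lemma fsum_meas_le1 {T} (dec : nat -> T) (fv : T -> R) (Hv : is_prob_mass dec fv) (lab : T -> nat) K :
  fsum (fun j => meas dec fv (fun y => Nat.eqb (lab y) j)) K <= 1.
Proof.
  assert (Hs : forall K, infinite_sum (fun k => fsum (fun j => if Nat.eqb (lab (dec k)) j then fv (dec k) else 0) K)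
                                      (fsum (fun j => meas dec fv (fun y => Nat.eqb (lab y) j)) K)).
  { induction K0; simpl.
    - exact (infinite_sum_finite (fun _ => 0) 0 (fun _ _ => eq_refl)).
    - apply infinite_sum_plus; auto. apply (meas_spec dec fv (fun y => Nat.eqb (lab y) K0) Hv). }
  destruct Hv as [Hpos Hsum].
  apply (sum_le_lim _ _ _ (Hs K)). intro n. eapply Rle_trans; [|apply (partial_le_lim _ _ n (fun k => Hpos (dec k)) Hsum)].
  apply sum_f_R0_le. intro k. apply (fsum_indic (fun y => lab (dec y)) (fv (dec k)) K k (Hpos _)).
Qed.

Lemma K_bound {T} (dec : nat -> T) (fv : T -> R) (Hv : is_prob_mass dec fv) h K lab :
  good_partition dec fv h K lab -> INR K * h <= 1.
Proof.
  intros [_ Hg]. eapply Rle_trans; [|apply (fsum_meas_le1 dec fv Hv lab K)].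
  assert (forall K', (K' <= K)%nat -> INR K' * h <= fsum (fun j => meas dec fv (fun y => Nat.eqb (lab y) j)) K').
  { induction K'; intro HK; [simpl; lra|]. rewrite S_INR; simpl fsum. specialize (Hg K' ltac:(lia)). specialize (IHK' ltac:(lia)). lra. }
  apply H; auto.
Qed.


Lemma exp_mono x y : x <= y -> exp x <= exp y.
Proof. intro H; destruct (Rle_lt_or_eq_dec _ _ H) as [H'|H']; [left; apply exp_increasing; auto|subst; lra]. Qed.

Lemma INR_pos n : (1 <= n)%nat -> 1 <= INR n.
Proof. intro; replace 1 with (INR 1) by auto; apply le_INR; auto. Qed.

Lemma tel C N M : (1 <= N)%nat ->
  sum_f_R0 (fun i => C / (INR (N + i) * INR (S (N + i)))) M = C / INR N - C / INR (S (N + M)).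
Proof.
  intro HN. pose proof (INR_pos N HN).
  induction M; cbn [sum_f_R0].
  - rewrite Nat.add_0_r. rewrite (S_INR N). field; lra.
  - rewrite IHM. replace (N + S M)%nat with (S (N + M)) by lia. rewrite !S_INR.
    pose proof (pos_INR (N + M)). field; lra.
Qed.

Lemma borel_cantelli {Om} F P (HP : @probability Om F P) (B : nat -> Om -> Prop) (C : R) N0 :
  (forall n, F (B n)) -> 0 <= C -> (1 <= N0)%nat ->
  (forall n, (N0 <= n)%nat -> P (B n) <= C / (INR n * INR (S n))) ->
  F (fun w => forall N, exists n, (N <= n)%nat /\ B n w) /\
  P (fun w => forall N, exists n, (N <= n)%nat /\ B n w) = 0.
Proof.
  intros HB HC HN0 Hb.
  assert (HU : forall N, F (fun w => exists n, (N <= n)%nat /\ B n w)).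
  { intro N. eapply F_ext; [apply (F_cunion F P (fun i => B (N + i)%nat) HP); auto|].
    intro w; split; [intros [i Hi]; exists (N + i)%nat; split; auto; lia|intros [n [Hn Hb']]; exists (n - N)%nat; replace (N + (n - N))%nat with n by lia; auto]. }
  assert (HF : F (fun w => forall N, exists n, (N <= n)%nat /\ B n w)) by (apply (F_cinter F P _ HP HU)).
  split; auto.
  assert (Htail : forall N, (N0 <= N)%nat -> P (fun w => exists n, (N <= n)%nat /\ B n w) <= C / INR N).
  { intros N HN. rewrite (P_ext P _ (fun w => exists i, B (N + i)%nat w)).
    - apply (P_cunion_le F P _ _ HP (fun i => HB _)). intro M.
      eapply Rle_trans; [apply (sum_f_R0_le _ (fun i => C / (INR (N + i) * INR (S (N + i)))))|].
      + intro i. apply Hb. lia.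
      + rewrite tel by lia. assert (0 <= C / INR (S (N + M))).
        { apply Rmult_le_pos; auto. left; apply Rinv_0_lt_compat, lt_0_INR; lia. }
        lra.
    - intro w; split; [intros [n [Hn Hb']]; exists (n - N)%nat; replace (N + (n - N))%nat with n by lia; auto|intros [i Hi]; exists (N + i)%nat; split; auto; lia]. }
  apply Rle_antisym; [|apply (P_nonneg F P _ HP HF)].
  apply Rnot_lt_le. intro Hpos.
  set (q := P (fun w => forall N, exists n, (N <= n)%nat /\ B n w)) in *.
  destruct (INR_unbounded (C / q)) as [N1 HN1].
  set (N := max N1 N0).
  assert (HNq : P (fun w => exists n, (N <= n)%nat /\ B n w) <= C / INR N) by (apply Htail; unfold N; lia).
  assert (Hq : q <= P (fun w => exists n, (N <= n)%nat /\ B n w)).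
  { apply (P_mono F P); auto. }
  assert (HINR : INR N1 <= INR N) by (apply le_INR; unfold N; lia).
  assert (HN : 0 < INR N) by (apply lt_0_INR; unfold N; lia).
  assert (C / INR N < q).
  { apply (Rmult_lt_reg_r (INR N)); auto. unfold Rdiv. rewrite Rmult_assoc, Rinv_l by lra. rewrite Rmult_1_r.
    assert (C / q < INR N) by lra. apply (Rmult_lt_compat_l q) in H; auto. unfold Rdiv in H.
    rewrite <- Rmult_assoc, (Rmult_comm q C), Rmult_assoc, Rinv_r, Rmult_1_r in H by lra. lra. }
  lra.
Qed.

Lemma decay (beta c : R) : 0 < beta -> 0 < c ->
  exists C, 0 <= C /\ forall n, (1 <= n)%nat ->
    2 * INR n * exp (- (c * Rpower (INR n) beta)) <= C / (INR n * INR (S n)).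
Proof.
  intros Hb Hc.
  destruct (INR_unbounded (3 / beta)) as [m0 Hm0].
  set (m := S m0).
  assert (Hm : 3 <= beta * INR m).
  { unfold m. rewrite S_INR. assert (3 / beta * beta = 3) by (field; lra). nra. }
  assert (Hmpos : 0 < INR m) by (apply lt_0_INR; unfold m; lia).
  exists (4 * (INR m / c) ^ m). split.
  { apply Rmult_le_pos; [lra|]. apply pow_le. apply Rmult_le_pos; [lra|left; apply Rinv_0_lt_compat; auto]. }
  intros n Hn. set (x := INR n). assert (Hx : 1 <= x) by (apply INR_pos; auto).
  set (y := c * Rpower x beta).
  assert (Hxb : 0 < Rpower x beta) by (unfold Rpower; apply exp_pos).
  assert (Hy : 0 < y) by (unfold y; nra).
  assert (Hey : (y / INR m) ^ m <= exp y).
  { replace (exp y) with (exp (y / INR m) ^ m).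
    - apply pow_incr. split; [left; apply Rdiv_lt_0_compat; auto|].
      pose proof (exp_ineq1_le (y / INR m)). lra.
    - rewrite exp_pow. f_equal. field; lra. }
  assert (Hpow : x ^ 3 <= Rpower x beta ^ m).
  { rewrite <- (Rpower_pow m (Rpower x beta)) by auto. rewrite Rpower_mult. rewrite <- (Rpower_pow 3 x) by lra.
    apply Rle_Rpower; auto. replace (INR 3) with 3 by (simpl; ring). lra. }
  assert (Hym : (y / INR m) ^ m = (c / INR m) ^ m * Rpower x beta ^ m).
  { rewrite <- Rpow_mult_distr. f_equal. unfold y. field; lra. }
  assert (Hcm : 0 < (c / INR m) ^ m) by (apply pow_lt; apply Rdiv_lt_0_compat; auto).
  assert (Hx3 : (c / INR m) ^ m * x ^ 3 <= exp y) by (rewrite Hym in Hey; nra).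
  assert (Hinv : (INR m / c) ^ m * (c / INR m) ^ m = 1).
  { rewrite <- Rpow_mult_distr. replace (INR m / c * (c / INR m)) with 1 by (field; lra). apply pow1. }
  assert (Hexpneg : exp (- y) = / exp y) by (apply exp_Ropp).
  assert (Hxpos : 0 < x) by lra.
  assert (Hx3pos : 0 < x ^ 3) by (apply pow_lt; lra).
  assert (Hey' : exp (- y) <= (INR m / c) ^ m / x ^ 3).
  { rewrite Hexpneg. pose proof (exp_pos y).
    apply (Rmult_le_reg_r (exp y)); auto. rewrite Rinv_l by lra.
    apply (Rmult_le_reg_r ((c / INR m) ^ m * x ^ 3)); [nra|].
    replace ((INR m / c) ^ m / x ^ 3 * exp y * ((c / INR m) ^ m * x ^ 3))
      with ((INR m / c) ^ m * (c / INR m) ^ m * exp y * (x ^ 3 / x ^ 3)) by (field; lra).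
    rewrite Hinv. unfold Rdiv; rewrite Rinv_r by lra. nra. }
  unfold x in *. rewrite S_INR.
  set (D := (INR m / c) ^ m) in *.
  assert (HD : 0 < D) by (unfold D; apply pow_lt; apply Rdiv_lt_0_compat; lra).
  apply Rle_trans with (2 * INR n * (D / INR n ^ 3)).
  { apply Rmult_le_compat_l; [lra|]. exact Hey'. }
  apply (Rmult_le_reg_r (INR n ^ 3)); auto.
  replace (2 * INR n * (D / INR n ^ 3) * INR n ^ 3) with (2 * INR n * D) by (field; lra).
  replace (4 * D / (INR n * (INR n + 1)) * INR n ^ 3) with (4 * D * INR n * (INR n / (INR n + 1))) by (field; lra).
  assert (1/2 <= INR n / (INR n + 1)).
  { apply (Rmult_le_reg_r (INR n + 1)); [lra|]. replace (INR n / (INR n + 1) * (INR n + 1)) with (INR n) by (field; lra). lra. }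
  apply Rle_trans with (4 * D * INR n * (1/2)); [lra|]. apply Rmult_le_compat_l; [nra|exact H].
Qed.


Lemma ratio_lemma fv a v h e p t :
  0 < fv -> 0 < a < 1 -> 0 < h -> h <= v -> 0 <= e -> 0 < t -> Rabs (p - e) <= a * h * t ->
  Rabs (fv * ((1 - a) * (p / v) + a) / (fv * ((1 - a) * (e / v) + a)) - 1) <= t.
Proof.
  intros Hf Ha Hh Hv He Ht Hpe.
  assert (Hvp : 0 < v) by lra.
  set (Bq := (1 - a) * (e / v) + a).
  assert (HB : a <= Bq) by (unfold Bq; assert (0 <= e / v) by (apply Rmult_le_pos; [lra|left; apply Rinv_0_lt_compat; lra]); nra).
  assert (HBn : Bq <> 0) by lra. assert (HBp : 0 < Bq) by lra. assert (HvB : 0 < v * Bq) by (apply Rmult_lt_0_compat; lra).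
  assert (HO : (1 - a) * (p / v) + a = Bq + (1 - a) * (p - e) / v) by (unfold Bq; field; lra).
  rewrite HO.
  replace (fv * (Bq + (1 - a) * (p - e) / v) / (fv * Bq) - 1) with (((1 - a) / (v * Bq)) * (p - e))
    by (field; repeat split; lra).
  rewrite Rabs_mult. rewrite (Rabs_right ((1 - a) / (v * Bq))).
  2:{ apply Rle_ge, Rmult_le_pos; [lra|left; apply Rinv_0_lt_compat; nra]. }
  assert (Hc : (1 - a) / (v * Bq) <= / (h * a)).
  { assert (Hha : 0 < h * a) by (apply Rmult_lt_0_compat; lra).
    apply (Rmult_le_reg_r (v * Bq * (h * a))); [apply Rmult_lt_0_compat; lra|].
    replace ((1 - a) / (v * Bq) * (v * Bq * (h * a))) with ((1 - a) * (h * a)) by (field; lra).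
    replace (/ (h * a) * (v * Bq * (h * a))) with (v * Bq) by (field; lra).
    assert (h * a <= v * Bq) by (apply Rmult_le_compat; lra). nra. }
  apply Rle_trans with (/ (h * a) * (a * h * t)).
  - apply Rmult_le_compat; auto; [left; apply Rdiv_lt_0_compat; lra|apply Rabs_pos].
  - right. field. split; lra.
Qed.

Lemma sum_const c m : sum_f_R0 (fun _ => c) m = INR (S m) * c.
Proof. induction m; [simpl; ring|]. cbn [sum_f_R0]. rewrite IHm, (S_INR (S m)); ring. Qed.

Lemma F_bw_fam {Om T} (enc : T -> nat) (dec : nat -> T) (Henc : forall x, dec (enc x) = x)
  F P (HP : @probability Om F P) (X : nat -> Om -> T)
  (HXF : forall k x, F (fun w => X k w = x)) (A : nat -> T -> bool) n (Q : nat -> list bool -> Prop) :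
  F (fun w => exists j, Q j (bw (A j) X n w)).
Proof.
  apply (F_cunion F P _ HP). intro j. apply (F_bw enc dec Henc F P HP X HXF (A j) n (Q j)).
Qed.


Theorem mainTheorem5
  (T : Type) (enc : T -> nat) (dec : nat -> T)
  (Henc : forall x, dec (enc x) = x) (Hdec : forall k, enc (dec k) = k)
  (fv fmu : T -> R)
  (Hv : is_prob_mass dec fv) (Hmu : is_prob_mass dec fmu)
  (Hvinf : forall l : list T, exists x, 0 < fv x /\ ~ In x l)
  (Hac : forall x, fv x = 0 -> fmu x = 0)
  (a h : nat -> R)
  (Ha : forall n, 0 < a n < 1) (Hh : forall n, 0 < h n < 1)
  (Ha0 : Un_cv a 0) (Hh0 : Un_cv h 0)
  (tau : R) (Htau : 0 < tau < 1/2)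
  (Hrate : Un_cv (fun n => / (a n * h n) / Rpower (INR n) tau) 0)
  (K : nat -> nat) (lab : nat -> T -> nat)
  (Hpart : forall n, max_partition dec fv (h n) (K n) (lab n))
  (Om : Type) (F : (Om -> Prop) -> Prop) (P : (Om -> Prop) -> R)
  (HP : probability F P)
  (X : nat -> Om -> T) (HX : iid_seq F P fmu X) :
  exists E : Om -> Prop, F E /\ P E = 1 /\
    forall w, E w ->
      forall eps, 0 < eps -> exists N : nat, forall n, (N <= n)%nat ->
        forall x, 0 < fv x ->
          Rabs (oracle fv fmu dec a lab n x / barron fv dec a lab X n w x - 1) <= eps.
Proof.
  destruct HX as [HXF HXP].
  set (Aj := fun n j => fun y => Nat.eqb (lab n y) j).
  set (pj := fun n j => meas dec fmu (Aj n j)).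
  set (d := fun n k => a n * h n / INR (S k)).
  set (B := fun k n w => exists j, (j <= pred (K n))%nat /\
              INR n * d n k <= Rabs (cnt (bw (Aj n j) X n w) - INR n * pj n j)).
  assert (HKpos : forall n, (1 <= K n)%nat).
  { intro n. destruct (Hpart n) as [[Hl _] _]. specialize (Hl (dec 0%nat)). lia. }
  assert (HBF : forall k n, F (B k n)).
  { intros k n. apply (F_bw_fam enc dec Henc F P HP X HXF (Aj n) n
      (fun j b => (j <= pred (K n))%nat /\ INR n * d n k <= Rabs (cnt b - INR n * pj n j))). }
  destruct (Hrate 1 ltac:(lra)) as [N0' HN0'].
  set (N0 := max N0' 1).
  assert (Hbound : forall k, exists C, 0 <= C /\ forall n, (N0 <= n)%nat -> P (B k n) <= C / (INR n * INR (S n))).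
  { intro k.
    set (c := / (8 * INR (S k) ^ 2)). set (beta := 1 - 2 * tau).
    assert (Hk : 0 < INR (S k)) by (apply lt_0_INR; lia).
    assert (Hc : 0 < c) by (unfold c; apply Rinv_0_lt_compat; apply Rmult_lt_0_compat; [lra|apply pow_lt; lra]).
    destruct (decay beta c ltac:(unfold beta; lra) Hc) as [C [HC HCb]].
    exists C; split; auto. intros n Hn.
    assert (Hn1 : (1 <= n)%nat) by (unfold N0 in Hn; lia).
    assert (Hx : 1 <= INR n) by (apply INR_pos; auto).
    pose proof (Ha n) as Han. pose proof (Hh n) as Hhn.
    set (s := a n * h n).
    assert (Hs : 0 < s < 1) by (unfold s; split; [apply Rmult_lt_0_compat; lra|nra]).
    set (r := Rpower (INR n) tau).
    assert (Hr : 0 < r) by (unfold r, Rpower; apply exp_pos).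
    assert (Hrs : 1 < r * s).
    { specialize (HN0' n ltac:(unfold N0 in Hn; lia)). unfold Rdist in HN0'. rewrite Rminus_0_r in HN0'.
      apply Rabs_def2 in HN0'. destruct HN0' as [HN0' _]. fold s r in HN0'.
      apply (Rmult_lt_compat_r (r * s)) in HN0'; [|apply Rmult_lt_0_compat; lra].
      replace (/ s / r * (r * s)) with 1 in HN0' by (field; lra). lra. }
    assert (Hrn : r <= INR n).
    { unfold r. rewrite <- (Rpower_1 (INR n)) at 2 by lra. apply Rle_Rpower; lra. }
    assert (HKn : INR (K n) <= INR n).
    { pose proof (K_bound dec fv Hv (h n) (K n) (lab n) (proj1 (Hpart n))) as HK.
      assert (Hsh : s <= h n) by (unfold s; nra).
      assert (r * s <= r * h n) by (apply Rmult_le_compat_l; lra).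
      assert (INR (K n) * h n < r * h n) by lra.
      assert (INR (K n) < r) by (apply (Rmult_lt_reg_r (h n)); lra). lra. }
    assert (Hdn : 0 < d n k <= 1).
    { unfold d. fold s. split; [apply Rdiv_lt_0_compat; lra|].
      apply (Rmult_le_reg_r (INR (S k))); auto. unfold Rdiv; rewrite Rmult_assoc, Rinv_l by lra.
      rewrite (S_INR k). pose proof (pos_INR k). nra. }
    assert (Hexpo : c * Rpower (INR n) beta <= INR n * d n k ^ 2 / 8).
    { assert (Hb : Rpower (INR n) beta = INR n / (r * r)).
      { unfold beta, r. unfold Rminus. rewrite Rpower_plus, Rpower_1 by lra.
        rewrite Rpower_Ropp. rewrite <- Rpower_plus. replace (tau + tau) with (2 * tau) by ring. reflexivity. }
      rewrite Hb. unfold d, c. fold s.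
      assert (1 <= (r * s) ^ 2) by nra.
      replace (INR n * (s / INR (S k)) ^ 2 / 8) with ((INR n / (r * r)) * (r * s) ^ 2 * / (8 * INR (S k) ^ 2)) by (field; lra).
      assert (0 < INR n / (r * r)) by (apply Rdiv_lt_0_compat; nra).
      assert (0 < / (8 * INR (S k) ^ 2)) by (apply Rinv_0_lt_compat; apply Rmult_lt_0_compat; [lra|apply pow_lt; lra]).
      set (u := INR n / (r * r)) in *. set (vv := / (8 * INR (S k) ^ 2)) in *.
      assert (0 < u * vv) by (apply Rmult_lt_0_compat; auto).
      replace (u * (r * s) ^ 2 * vv) with ((u * vv) * (r * s) ^ 2) by ring.
      rewrite Rmult_comm. rewrite <- (Rmult_1_r (u * vv)) at 1. apply Rmult_le_compat_l; lra. }
    eapply Rle_trans; [|apply (HCb n Hn1)].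
    unfold B. eapply Rle_trans; [apply (P_bunion_le F P (fun j w => INR n * d n k <= Rabs (cnt (bw (Aj n j) X n w) - INR n * pj n j))); auto|].
    { intro j. apply (F_bw enc dec Henc F P HP X HXF (Aj n j) n (fun b => INR n * d n k <= Rabs (cnt b - INR n * pj n j))). }
    eapply Rle_trans; [apply (sum_f_R0_le _ (fun _ => 2 * exp (- (INR n * d n k ^ 2 / 8))))|].
    { intro j. apply (chernoff enc dec Henc Hdec fmu Hmu F P HP X HXF HXP (Aj n j) n (d n k) Hdn). }
    rewrite sum_const. replace (S (pred (K n))) with (K n) by (specialize (HKpos n); lia).
    pose proof (exp_mono _ _ (Ropp_le_contravar _ _ Hexpo)).
    pose proof (exp_pos (- (INR n * d n k ^ 2 / 8))). pose proof (pos_INR (K n)).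
    nra. }
  assert (HZ : forall k, F (fun w => forall N, exists n, (N <= n)%nat /\ B k n w) /\
                         P (fun w => forall N, exists n, (N <= n)%nat /\ B k n w) = 0).
  { intro k. destruct (Hbound k) as [C [HC HCb]].
    apply (borel_cantelli F P HP (B k) C N0 (HBF k) HC ltac:(unfold N0; lia) HCb). }
  set (Bad := fun w => exists k, forall N, exists n, (N <= n)%nat /\ B k n w).
  assert (HBadF : F Bad) by (apply (F_cunion F P _ HP); intro k; apply (HZ k)).
  assert (HBad0 : P Bad = 0).
  { apply Rle_antisym; [|apply (P_nonneg F P _ HP HBadF)].
    apply (P_cunion_le F P _ 0 HP (fun k => proj1 (HZ k))). intro m.
    rewrite (sum_f_R0_le _ (fun _ => 0)); [rewrite sum_const; lra|]. intro k; rewrite (proj2 (HZ k)); lra. }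
  exists (fun w => ~ Bad w). split; [apply (F_compl F P _ HP HBadF)|]. split.
  { rewrite (P_compl F P _ HP HBadF), HBad0. ring. }
  intros w Hw eps Heps.
  destruct (INR_unbounded (/ eps)) as [k Hk].
  assert (Hkeps : / INR (S k) <= eps).
  { rewrite S_INR. assert (0 < / eps) by (apply Rinv_0_lt_compat; auto).
    rewrite <- (Rinv_inv eps). apply Rinv_le_contravar; auto. lra. }
  assert (HnZ : ~ forall N, exists n, (N <= n)%nat /\ B k n w) by (intro H; apply Hw; exists k; auto).
  apply not_all_ex_not in HnZ. destruct HnZ as [N HN].
  exists (max N 1). intros n Hn x Hx.
  assert (HnB : ~ B k n w) by (intro HB; apply HN; exists n; split; auto; lia).
  pose proof (Ha n) as Han. pose proof (Hh n) as Hhn.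
  destruct (Hpart n) as [[Hlab Hcell] _].
  set (j := lab n x).
  assert (Hj : (j <= pred (K n))%nat) by (specialize (Hlab x); unfold j; lia).
  assert (Hdev : Rabs (cnt (bw (Aj n j) X n w) - INR n * pj n j) < INR n * d n k).
  { apply Rnot_le_lt. intro H'. apply HnB. exists j; auto. }
  assert (Hn1 : (1 <= n)%nat) by lia.
  assert (HnR : 0 < INR n) by (apply lt_0_INR; lia).
  unfold oracle, barron. rewrite (emp_cnt _ X n w Hn1).
  apply Rle_trans with (/ INR (S k)); [|exact Hkeps].
  apply (ratio_lemma (fv x) (a n) (meas dec fv (cell (lab n) x)) (h n)); [auto|auto|lra| | | |].
  - apply (Hcell j). specialize (Hlab x); unfold j; lia.
  - apply Rmult_le_pos; [apply cnt_nonneg|left; apply Rinv_0_lt_compat; auto].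
  - apply Rinv_0_lt_compat, lt_0_INR; lia.
  - fold j. change (meas dec fmu (cell (lab n) x)) with (pj n j). change (cell (lab n) x) with (Aj n j).
    replace (pj n j - cnt (bw (Aj n j) X n w) / INR n) with (- ((cnt (bw (Aj n j) X n w) - INR n * pj n j) / INR n)) by (field; lra).
    rewrite Rabs_Ropp. unfold Rdiv at 1. rewrite Rabs_mult, (Rabs_right (/ INR n)) by (left; apply Rinv_0_lt_compat; auto).
    apply (Rmult_le_reg_r (INR n)); auto. rewrite Rmult_assoc, Rinv_l, Rmult_1_r by lra.
    unfold d in Hdev. replace (a n * h n * / INR (S k) * INR n) with (INR n * (a n * h n / INR (S k))) by (unfold Rdiv; ring).
    lra.
Qed.
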